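(* Let $\mathcal{X},\mathcal{Y},\mathcal{Z}$ be bounded subsets of a metric space $(\mathcal{S},\eta)$, let $X$ be an uncertain variable with marginal range $[[X]]=\mathcal{X}$, and let $Y=g(X)$ and $Z=h(X)$, where $g:\mathcal{X}\to\mathcal{Y}$ is $L$-invertible and $h:\mathcal{X}\to\mathcal{Z}$ is Lipschitz. Then there exists $L_{Z|Y}\ge0$ such that $\mathcal{H}([[Z|y^1]],[[Z|y^2]])\le L_{Z|Y}\,\eta(y^1,y^2)$ for all $y^1,y^2\in[[Y]]$.
   Context: Uncertain variables: fix a sample space $\Omega$; an uncertain variable with values in a set $\mathcal{X}$ is a map $X:\Omega\to\mathcal{X}$, with marginal range $[[X]]:=\{X(\omega):\omega\in\Omega\}$; for uncertain variables $Z,Y$ and $y\in[[Y]]$, the conditional range is $[[Z|y]]:=\{Z(\omega):\omega\in\Omega,\ Y(\omega)=y\}$. Hausdorff distance: for nonempty $\mathcal{A},\mathcal{B}\subseteq\mathcal{S}$, $\mathcal{H}(\mathcal{A},\mathcal{B}):=\max\{\sup_{a\in\mathcal{A}}\inf_{b\in\mathcal{B}}\eta(a,b),\sup_{b\in\mathcal{B}}\inf_{a\in\mathcal{A}}\eta(a,b)\}$. A function $g:\mathcal{X}\to\mathcal{Y}$ is $L$-invertible if there is $L_{g^{-1}}\ge0$ with $\mathcal{H}(g^{-1}(y^1),g^{-1}(y^2))\le L_{g^{-1}}\eta(y^1,y^2)$ for all $y^1,y^2$ in $g(\mathcal{X})$, where $g^{-1}(y)=\{x\in\mathcal{X}:g(x)=y\}$.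 *)

(* Defs.v *)
From HB Require Import structures.
From mathcomp Require Import all_boot all_order all_algebra.
From mathcomp Require Import all_classical all_reals.
Set Implicit Arguments. Unset Strict Implicit. Unset Printing Implicit Defensive.
Import Order.TTheory GRing.Theory Num.Theory.
Local Open Scope classical_set_scope.
Local Open Scope ring_scope.

Definition is_metric {R : realType} {S : Type} (eta : S -> S -> R) : Prop :=
  (forall x y, 0 <= eta x y) /\
  (forall x y, eta x y = 0 <-> x = y) /\
  (forall x y, eta x y = eta y x) /\
  (forall x y z, eta x z <= eta x y + eta y z).

Definition bounded_set {R : realType} {S : Type} (eta : S -> S -> R) (A : set S) : Prop :=
  exists M : R, forall a b, A a -> A b -> eta a b <= M.

(* Hausdorff distance (sup/inf of real sets; meaningful for nonempty bounded sets) *)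
Definition hausdorff {R : realType} {S : Type} (eta : S -> S -> R) (A B : set S) : R :=
  Num.max (sup [set inf [set eta a b | b in B] | a in A])
          (sup [set inf [set eta a b | a in A] | b in B]).

Definition mrange {Omega S : Type} (X : Omega -> S) : set S := [set X w | w in setT].

Definition crange {Omega S T : Type} (Z : Omega -> S) (Y : Omega -> T) (y : T) : set S :=
  [set Z w | w in [set w | Y w = y]].

Definition preim_on {S T : Type} (Xs : set S) (g : S -> T) (y : T) : set S :=
  [set x | Xs x /\ g x = y].

Definition L_invertible {R : realType} {S : Type} (eta : S -> S -> R)
    (Xs : set S) (g : S -> S) : Prop :=
  exists L : R, 0 <= L /\
    forall y1 y2, (g @` Xs) y1 -> (g @` Xs) y2 ->
      hausdorff eta (preim_on Xs g y1) (preim_on Xs g y2) <= L * eta y1 y2.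

Definition lipschitz_on {R : realType} {S : Type} (eta : S -> S -> R)
    (Xs : set S) (h : S -> S) : Prop :=
  exists L : R, 0 <= L /\
    forall x1 x2, Xs x1 -> Xs x2 -> eta (h x1) (h x2) <= L * eta x1 x2.

(* Main.v *)
Require Import Defs.
From HB Require Import structures.
From mathcomp Require Import all_boot all_order all_algebra.
From mathcomp Require Import all_classical all_reals.
Import Order.TTheory GRing.Theory Num.Theory.
Local Open Scope classical_set_scope.
Local Open Scope ring_scope.

Lemma half (R : realType) (S : Type) (d : S -> S -> R) (h : S -> S)
  (A1 A2 : set S) (K M : R) :
  0 < K -> A1 !=set0 -> A2 !=set0 -> (forall x y, 0 <= d x y) ->
  (forall a b, A1 a -> A2 b -> d a b <= M) ->
  (forall a b, A1 a -> A2 b -> d (h a) (h b) <= K * d a b) ->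
  sup [set inf [set d a b | b in h @` A2] | a in h @` A1]
    <= K * sup [set inf [set d a b | b in A2] | a in A1].
Proof.
move=> K0 [a0 Ha0] [b0 Hb0] d0 dM dK.
apply: ge_sup.
  by exists (inf [set d (h a0) b | b in h @` A2]); exists (h a0) => //; exists a0.
move=> _ [_ [a Ha <-] <-].
have lbA : forall a', has_lbound [set d a' b | b in A2].
  by move=> a'; exists 0 => _ [b _ <-].
have lbB : forall z, has_lbound [set d z b | b in h @` A2].
  by move=> z; exists 0 => _ [b _ <-].
have ub : has_ubound [set inf [set d a b | b in A2] | a in A1].
  exists M => _ [a' Ha' <-].
  apply: le_trans (dM a' b0 Ha' Hb0).
  by apply: (ge_inf (lbA a')); exists b0.
have step : inf [set d (h a) b | b in h @` A2] <= K * inf [set d a b | b in A2].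
  rewrite -ler_pdivrMl //.
  apply: lb_le_inf; first by exists (d a b0); exists b0.
  move=> _ [b Hb <-].
  rewrite ler_pdivrMl //.
  apply: le_trans (dK a b Ha Hb).
  by apply: (ge_inf (lbB (h a))); exists (h b) => //; exists b.
apply: (le_trans step).
rewrite ler_pM2l //.
by apply: (ub_le_sup ub); exists a.
Qed.

Lemma hbound (R : realType) (S : Type) (eta : S -> S -> R) (h : S -> S)
  (A1 A2 : set S) (K M : R) :
  0 < K -> A1 !=set0 -> A2 !=set0 -> is_metric eta ->
  (forall a b, A1 a -> A2 b -> eta a b <= M) ->
  (forall a b, A1 a -> A2 b -> eta (h a) (h b) <= K * eta a b) ->
  hausdorff eta (h @` A1) (h @` A2) <= K * hausdorff eta A1 A2.
Proof.
move=> K0 n1 n2 [e0 [_ [esym _]]] dM dK.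
rewrite /hausdorff ge_max; apply/andP; split.
  apply: le_trans (@half R S eta h A1 A2 K M K0 n1 n2 e0 dM dK) _.
  by rewrite ler_pM2l // le_max lexx.
have := @half R S (fun x y => eta y x) h A2 A1 K M K0 n2 n1 (fun x y => e0 y x)
  (fun a b Ha Hb => dM b a Hb Ha) (fun a b Ha Hb => dK b a Hb Ha).
move=> H; apply: le_trans H _.
by rewrite ler_pM2l // le_max lexx orbT.
Qed.

Theorem lemma6 (R : realType) (S : Type) (eta : S -> S -> R)
  (Xs Ys Zs : set S) (Omega : Type) (X : Omega -> S) (g h : S -> S) :
  is_metric eta ->
  bounded_set eta Xs -> bounded_set eta Ys -> bounded_set eta Zs ->
  mrange X = Xs ->
  (forall x, Xs x -> Ys (g x)) ->
  (forall x, Xs x -> Zs (h x)) ->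
  L_invertible eta Xs g ->
  lipschitz_on eta Xs h ->
  exists LZY : R, 0 <= LZY /\
    forall y1 y2, mrange (g \o X) y1 -> mrange (g \o X) y2 ->
      hausdorff eta (crange (h \o X) (g \o X) y1) (crange (h \o X) (g \o X) y2)
        <= LZY * eta y1 y2.
Proof.
move=> met [M HM] _ _ HX _ _ [Lg [Lg0 HLg]] [Lh [Lh0 HLh]].
have K0 : 0 < Lh + 1 by apply: ltr_wpDl.
exists ((Lh + 1) * Lg); split; first by apply: mulr_ge0 => //; apply: ltW.
have cr : forall y, crange (h \o X) (g \o X) y = h @` preim_on Xs g y.
  move=> y; rewrite /crange /preim_on -HX; apply/seteqP; split.
    by move=> _ [w /= Hw <-]; exists (X w) => //; split => //; exists w.
  by move=> _ [_ [[w _ <-] /= Hw] <-]; exists w.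
have ne : forall y, mrange (g \o X) y -> preim_on Xs g y !=set0.
  by move=> y [w _ <-]; exists (X w); split => //; rewrite -HX; exists w.
have rg : forall y, mrange (g \o X) y -> (g @` Xs) y.
  by move=> y [w _ <-]; exists (X w) => //; rewrite -HX; exists w.
move=> y1 y2 H1 H2; rewrite !cr.
have := @hbound R S eta h (preim_on Xs g y1) (preim_on Xs g y2) (Lh + 1) M K0
  (ne _ H1) (ne _ H2) met (fun a b Ha Hb => HM a b Ha.1 Hb.1).
move=> H; apply: le_trans (H _) _.
  move=> a b [Ha _] [Hb _]; apply: le_trans (HLh a b Ha Hb) _.
  by rewrite ler_wpM2r ?lerDl //; case: met => ->.
by rewrite -mulrA ler_pM2l //; apply: HLg; apply: rg.
Qed.
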